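(* For $X_d=\otimes_{j=1}^d X_{1,j}$, the following are equivalent: (i) $\sup_{d\in\mathbb N}n^{X_d}(\varepsilon)<\infty$ for every $\varepsilon\in(0,1)$; (ii) $\displaystyle\sum_{j=1}^\infty\sum_{k=2}^\infty\frac{\lambda^{X_{1,j}}_k}{\lambda^{X_{1,j}}_1}<\infty$.
   Context: For a centered Hilbert-space random element $Z$ with finite second moment, $\lambda^Z_1\ge\lambda^Z_2\ge\dots\ge 0$ denote the eigenvalues of its covariance operator $K^Z$ listed with multiplicity (padded with zeros if there are finitely many), $\Lambda^Z=\sum_k\lambda^Z_k$, $\bar\lambda^Z_k=\lambda^Z_k/\Lambda^Z$. Let $H_{1,j}$, $j\in\mathbb N$, be separable Hilbert spaces and $X_{1,j}$ centered $H_{1,j}$-valued random elements with $\mathbb E\|X_{1,j}\|^2<\infty$ and $\lambda^{X_{1,j}}_1>0$. $X_d=\otimes_{j=1}^dX_{1,j}$ means: $X_d$ is a centered random element of the Hilbert tensor product $H_d=\otimes_{j=1}^dH_{1,j}$ with covariance operator $K^{X_d}=\otimes_{j=1}^dK^{X_{1,j}}$; so the eigenvalues of $K^{X_d}$ are the products $\prod_{j=1}^d\lambda^{X_{1,j}}_{k_j}$, $(k_1,\dots,k_d)\in\mathbb N^d$, and $\Lambda^{X_d}=\prod_j\Lambda^{X_{1,j}}$. The average case approximation complexity is $n^{X_d}(\varepsilon)=\min\{n\in\mathbb N: e^{X_d}(n)\le\varepsilon e^{X_d}(0)\}$, where $e^{X_d}(0)=(\mathbb E\|X_d\|^2)^{1/2}$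 and $e^{X_d}(n)$ is the infimum of $(\mathbb E\|X_d-\sum_{m=1}^n l_m(X_d)\psi_m\|^2)^{1/2}$ over $\psi_m\in H_d$, $l_m\in H_d^*$; equivalently $n^{X_d}(\varepsilon)=\min\{n:\sum_{k>n}\bar\lambda^{X_d}_k\le\varepsilon^2\}$. *)

(* Defs.v *)
From Stdlib Require Import Reals List.
Open Scope R_scope.

(* Conventions (0-based): factor index j = 0,1,... stands for the paper's
   j = 1,2,...; eigenvalue index k = 0,1,... stands for the paper's k = 1,2,...
   lam j : nat -> R is the eigenvalue listing (with multiplicity, padded by
   zeros, nonincreasing) of the covariance operator K^{X_{1,j}}. *)

(* Eigenvalue sequence of a covariance operator of a centered random element
   with finite second moment: nonnegative, nonincreasing, summable. *)
Definition eig_seq (l : nat -> R) : Prop :=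
  (forall k, 0 <= l k) /\ (forall k, l (S k) <= l k) /\
  (exists L, infinite_sum l L).

(* Eigenvalue of K^{X_d} = (x)_{j<d} K^{X_{1,j}} at multi-index t = (k_1,...,k_d):
   prod_j lam_j(k_j); [prodeig lam j0 t] starts at factor j0. *)
Fixpoint prodeig (lam : nat -> nat -> R) (j0 : nat) (t : list nat) : R :=
  match t with
  | nil => 1
  | k :: t' => lam j0 k * prodeig lam (S j0) t'
  end.

(* mu is the nonincreasing listing, with multiplicity (padded with zeros),
   of the eigenvalues { prodeig lam 0 t : t in N^d } of K^{X_d}:
   mu is nonnegative, nonincreasing, and every value c > 0 occurs in mu
   exactly as many times (finitely many) as among the products. *)
Definition tensor_listing (lam : nat -> nat -> R) (d : nat) (mu : nat -> R) : Prop :=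
  (forall k, 0 <= mu k) /\ (forall k, mu (S k) <= mu k) /\
  forall c, 0 < c ->
    exists (l1 : list nat) (l2 : list (list nat)),
      NoDup l1 /\ NoDup l2 /\ length l1 = length l2 /\
      (forall k, In k l1 <-> mu k = c) /\
      (forall t, In t l2 <-> (length t = d /\ prodeig lam 0 t = c)).

(* "sum_{k>n} lambdabar_k <= eps^2" for the eigenvalue listing mu
   (tail sum over 0-based indices >= n, normalized by Lambda = sum mu). *)
Definition approx_ok (mu : nat -> R) (n : nat) (eps : R) : Prop :=
  exists Lam T, infinite_sum mu Lam /\ infinite_sum (fun k => mu (n + k)%nat) T /\
    T / Lam <= eps ^ 2.

(* Main.v *)
Require Import Defs.
From Stdlib Require Import Reals List Lra Lia Classical ClassicalEpsilon.
Open Scope R_scope.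

Fixpoint fsum (f : nat -> R) (n : nat) : R :=
  match n with O => 0 | S n' => fsum f n' + f n' end.
Fixpoint lsum {A : Type} (f : A -> R) (l : list A) : R :=
  match l with nil => 0 | x :: l' => f x + lsum f l' end.

Lemma fsum_sumf f n : fsum f (S n) = sum_f_R0 f n.
Proof. induction n; simpl in *; [ring|]. rewrite <- IHn. simpl. ring. Qed.

Lemma lsum_app {A} (f : A -> R) l1 l2 : lsum f (l1 ++ l2) = lsum f l1 + lsum f l2.
Proof. induction l1; simpl; [ring|]. rewrite IHl1; ring. Qed.

Lemma lsum_nonneg {A} (f : A -> R) l : (forall x, In x l -> 0 <= f x) -> 0 <= lsum f l.
Proof. induction l; simpl; intros H; [lra|].
  assert (0 <= f a) by auto. assert (0 <= lsum f l) by auto. lra. Qed.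

Lemma lsum_seq f n : lsum f (seq 0 n) = fsum f n.
Proof. induction n; [simpl; ring|]. rewrite seq_S, lsum_app, IHn; simpl; ring. Qed.

Lemma lsum_map {A B} (f : B -> R) (g : A -> B) l : lsum f (map g l) = lsum (fun x => f (g x)) l.
Proof. induction l; simpl; congruence. Qed.

Lemma lsum_mapeq {A B} (f : A -> R) (g : B -> R) F G :
  map g G = map f F -> lsum g G = lsum f F.
Proof. revert G; induction F; destruct G; simpl; intros H; try discriminate; auto.
  inversion H. rewrite (IHF G); auto. Qed.

Lemma lsum_incl {A} (f : A -> R) (G B : list A) :
  NoDup G -> incl G B -> (forall x, In x B -> 0 <= f x) -> lsum f G <= lsum f B.
Proof.
  revert B; induction G as [|x G IH]; intros B HN Hi Hf; simpl.
  - apply lsum_nonneg; auto.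
  - assert (Hx : In x B) by (apply Hi; left; auto).
    destruct (in_split _ _ Hx) as [B1 [B2 ->]].
    inversion HN; subst.
    assert (lsum f G <= lsum f (B1 ++ B2)).
    { apply IH; auto.
      - intros y Hy. assert (In y (B1 ++ x :: B2)) by (apply Hi; right; auto).
        apply in_app_or in H. apply in_or_app. destruct H as [H|[H|H]]; auto.
        subst; contradiction.
      - intros y Hy. apply Hf. apply in_app_or in Hy; apply in_or_app; simpl; tauto. }
    rewrite !lsum_app in *. simpl. lra.
Qed.

Lemma fsum_mono f m n : (forall k, 0 <= f k) -> (m <= n)%nat -> fsum f m <= fsum f n.
Proof. intros Hf H; induction H as [|n H IH]; simpl; [lra|]. specialize (Hf n). lra. Qed.

Lemma noninc_le (mu : nat -> R) : (forall k, mu (S k) <= mu k) ->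
  forall m x, (m <= x)%nat -> mu x <= mu m.
Proof. intros H m x Hx; induction Hx as [|n Hx IH]; [lra|]. specialize (H n); lra. Qed.

Lemma rank_lemma (mu : nat -> R) : (forall k, 0 <= mu k) -> (forall k, mu (S k) <= mu k) ->
  forall G : list nat, NoDup G -> lsum mu G <= fsum mu (length G).
Proof.
  intros H0 H1 G. remember (length G) as m. revert G Heqm.
  induction m; intros G Hm HN.
  - destruct G; simpl in *; [lra|discriminate].
  - destruct (classic (exists x, In x G /\ (m <= x)%nat)) as [[x [Hx Hxm]]|Hno].
    + destruct (in_split _ _ Hx) as [G1 [G2 ->]].
      pose proof (NoDup_remove _ _ _ HN) as [HN' _].
      rewrite length_app in Hm; simpl in Hm.
      assert (lsum mu (G1 ++ G2) <= fsum mu m) by (apply IHm; auto; rewrite length_app; lia).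
      rewrite lsum_app in *. simpl. pose proof (noninc_le mu H1 m x Hxm). lra.
    + rewrite <- lsum_seq. apply lsum_incl; auto.
      intros y Hy. apply in_seq. split; [lia|].
      destruct (Nat.lt_ge_cases y (S m)); [lia|].
      exfalso; apply Hno; exists y; split; auto; lia.
Qed.

Definition fib {X} (f : X -> R) (c : R) (x : X) : bool :=
  if Req_EM_T (f x) c then true else false.

Lemma cnt_map {X Y} (f : X -> R) (g : Y -> R) c F G :
  map g G = map f F -> length (filter (fib g c) G) = length (filter (fib f c) F).
Proof. revert G; induction F as [|a F IHF]; destruct G as [|b G]; simpl; intros H; try discriminate; auto.
  inversion H as [[H1 H2]]. specialize (IHF G H2). unfold fib in *. rewrite H1.
  destruct (Req_EM_T (f a) c); simpl; rewrite IHF; auto. Qed.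

Lemma transfer {X Y} (P : X -> Prop) (Q : Y -> Prop) (f : X -> R) (g : Y -> R) :
  (forall c, 0 < c -> exists l1 l2, NoDup l1 /\ NoDup l2 /\ length l1 = length l2 /\
     (forall x, In x l1 <-> P x /\ f x = c) /\ (forall y, In y l2 <-> Q y /\ g y = c)) ->
  forall F, NoDup F -> (forall x, In x F -> P x /\ 0 < f x) ->
  exists G, NoDup G /\ (forall y, In y G -> Q y) /\ map g G = map f F.
Proof.
  intros Hfib F. induction F as [|x F IH]; intros HN HF.
  - exists nil; repeat split; simpl; auto. constructor. tauto.
  - inversion HN; subst.
    destruct IH as [G [HG1 [HG2 HG3]]]; auto. { intros; apply HF; right; auto. }
    destruct (HF x (or_introl eq_refl)) as [HPx Hfx].
    destruct (Hfib (f x) Hfx) as [l1 [l2 [N1 [N2 [Hl [I1 I2]]]]]].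
    assert (Hex : exists y, In y l2 /\ ~ In y G).
    { apply NNPP; intro Hno.
      assert (incl l2 (filter (fib g (f x)) G)).
      { intros y Hy. apply filter_In. split.
        - apply NNPP; intro Hn; apply Hno; exists y; auto.
        - unfold fib. apply I2 in Hy. destruct (Req_EM_T (g y) (f x)); tauto. }
      assert (incl (x :: filter (fib f (f x)) F) l1).
      { intros z [Hz|Hz].
        - subst; apply I1; auto.
        - apply filter_In in Hz as [Hz1 Hz2]. apply I1. split.
          + apply HF; right; auto.
          + unfold fib in Hz2; destruct (Req_EM_T (f z) (f x)); congruence. }
      assert (NoDup (x :: filter (fib f (f x)) F)).
      { constructor. intro Hc; apply filter_In in Hc; tauto. apply NoDup_filter; auto. }
      pose proof (NoDup_incl_length N2 H).
      pose proof (NoDup_incl_length H3 H0).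
      rewrite (cnt_map f g (f x) F G HG3) in H4. simpl in H5. lia. }
    destruct Hex as [y [Hy1 Hy2]]. apply I2 in Hy1 as [HQy Hgy].
    exists (y :: G). split; [constructor; auto|]. split.
    + intros z [Hz|Hz]; [subst; auto|auto].
    + simpl. rewrite Hgy, HG3. auto.
Qed.
Fixpoint box (j0 d : nat) (Kf : nat -> nat) : list (list nat) :=
  match d with O => nil :: nil
  | S d' => flat_map (fun k => map (cons k) (box (S j0) d' Kf)) (seq 0 (Kf j0)) end.
Fixpoint inbox (j0 : nat) (Kf : nat -> nat) (t : list nat) : Prop :=
  match t with nil => True | k :: t' => (k < Kf j0)%nat /\ inbox (S j0) Kf t' end.

Lemma box_In d : forall j0 Kf t, In t (box j0 d Kf) <-> length t = d /\ inbox j0 Kf t.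
Proof.
  induction d; intros j0 Kf t; simpl.
  - split. intros [H|[]]; subst; simpl; auto.
    intros [H _]; destruct t; simpl in *; auto; discriminate.
  - rewrite in_flat_map. split.
    + intros [k [Hk Ht]]. apply in_map_iff in Ht as [t' [<- Ht']].
      apply IHd in Ht' as [H1 H2]. apply in_seq in Hk. simpl; split; [lia|]. split; [lia|auto].
    + destruct t as [|k t']; simpl; intros [H1 H2]; [discriminate|].
      exists k; split. apply in_seq; lia. apply in_map. apply IHd; split; [lia|tauto].
Qed.

Lemma map_cons_NoDup (k : nat) B : NoDup B -> NoDup (map (cons k) B).
Proof. induction 1; simpl; constructor; auto.
  intro Hc; apply in_map_iff in Hc as [y [Hy Hy']]. inversion Hy; subst; auto. Qed.

Lemma flatmap_NoDup (ks : list nat) B : NoDup ks -> NoDup B ->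
  NoDup (flat_map (fun k => map (cons k) B) ks).
Proof. intros Hk HB; induction Hk as [|k ks Hn Hk IH]; simpl; [constructor|].
  apply NoDup_app; auto. apply map_cons_NoDup; auto.
  intros a Ha Hb. apply in_map_iff in Ha as [y [<- _]].
  apply in_flat_map in Hb as [k' [Hk' Hb]]. apply in_map_iff in Hb as [z [Hz _]].
  inversion Hz; subst; auto. Qed.

Lemma box_NoDup d : forall j0 Kf, NoDup (box j0 d Kf).
Proof. induction d; intros; simpl. repeat constructor; auto.
  apply flatmap_NoDup; auto. apply seq_NoDup. Qed.

Fixpoint nprod (j0 d : nat) (Kf : nat -> nat) : nat :=
  match d with O => 1%nat | S d' => (Kf j0 * nprod (S j0) d' Kf)%nat end.

Lemma flatmap_length (ks : list nat) (B : list (list nat)) :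
  length (flat_map (fun k => map (cons k) B) ks) = (length ks * length B)%nat.
Proof. induction ks; simpl; auto. rewrite length_app, length_map, IHks; lia. Qed.

Lemma box_length d : forall j0 Kf, length (box j0 d Kf) = nprod j0 d Kf.
Proof. induction d; intros; simpl; auto. rewrite flatmap_length, length_seq, IHd; auto. Qed.

Fixpoint rprod (j0 d : nat) (h : nat -> R) : R :=
  match d with O => 1 | S d' => h j0 * rprod (S j0) d' h end.

Lemma lsum_flatmap (f : list nat -> R) (ks : list nat) B :
  lsum f (flat_map (fun k => map (cons k) B) ks) = lsum (fun k => lsum f (map (cons k) B)) ks.
Proof. induction ks; simpl; auto. rewrite lsum_app, IHks; auto. Qed.

Lemma lsum_scale {A} (f : A -> R) c l : lsum (fun x => c * f x) l = c * lsum f l.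
Proof. induction l; simpl; [ring|]. rewrite IHl; ring. Qed.
Lemma lsum_scale_r {A} (f : A -> R) c l : lsum (fun x => f x * c) l = lsum f l * c.
Proof. induction l; simpl; [ring|]. rewrite IHl; ring. Qed.

Lemma lsum_ext {A} (f g : A -> R) l : (forall x, In x l -> f x = g x) -> lsum f l = lsum g l.
Proof. induction l; simpl; intros H; auto. rewrite H, IHl; auto. Qed.

Lemma box_sum lam d : forall j0 Kf,
  lsum (prodeig lam j0) (box j0 d Kf) = rprod j0 d (fun j => fsum (lam j) (Kf j)).
Proof. induction d; intros; simpl. ring.
  rewrite lsum_flatmap.
  transitivity (lsum (fun k => lam j0 k * rprod (S j0) d (fun j => fsum (lam j) (Kf j))) (seq 0 (Kf j0))).
  - apply lsum_ext; intros k _. rewrite lsum_map. simpl.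
    rewrite lsum_scale, IHd; auto.
  - rewrite lsum_scale_r, lsum_seq; auto.
Qed.

Lemma nprod_add a : forall j0 b Kf, nprod j0 (a + b) Kf = (nprod j0 a Kf * nprod (j0 + a) b Kf)%nat.
Proof. induction a; intros; simpl. rewrite !Nat.add_0_r; lia.
  rewrite IHa. replace (S j0 + a)%nat with (j0 + S a)%nat by lia. ring. Qed.

Lemma nprod_ge1 b : forall j0 Kf, (forall j, 1 <= Kf j)%nat -> (1 <= nprod j0 b Kf)%nat.
Proof. induction b; intros j0 Kf H; simpl; auto. specialize (IHb (S j0) Kf H). specialize (H j0). destruct (Kf j0); [lia|]. destruct (nprod (S j0) b Kf); lia. Qed.

Lemma nprod_one b : forall j0 Kf, (forall j, (j0 <= j)%nat -> Kf j = 1%nat) -> nprod j0 b Kf = 1%nat.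
Proof. induction b; intros; simpl; auto. rewrite H, IHb; auto. intros; apply H; lia. Qed.

Lemma nprod_bound J K d : (1 <= K)%nat ->
  (nprod 0 d (fun j => if Nat.ltb j J then K else 1%nat) <= nprod 0 J (fun j => if Nat.ltb j J then K else 1%nat))%nat.
Proof. intros HK. set (Kf := fun j => if Nat.ltb j J then K else 1%nat).
  assert (H1 : forall j, (1 <= Kf j)%nat). { intros j; unfold Kf; destruct (Nat.ltb j J); lia. }
  destruct (Nat.le_ge_cases d J).
  - assert (E: nprod 0 J Kf = nprod 0 (d + (J - d)) Kf) by (f_equal; lia). rewrite E, nprod_add.
    pose proof (nprod_ge1 (J - d) (0 + d) Kf H1). nia.
  - assert (E: nprod 0 d Kf = nprod 0 (J + (d - J)) Kf) by (f_equal; lia). rewrite E, nprod_add.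
    rewrite (nprod_one _ (0 + J)); [lia|]. intros j Hj; unfold Kf.
    destruct (Nat.ltb_spec j J); lia.
Qed.

Lemma prodeig_nonneg lam : (forall j k, 0 <= lam j k) -> forall t j0, 0 <= prodeig lam j0 t.
Proof. intros H t; induction t; intros; simpl; [lra|]. apply Rmult_le_pos; auto. Qed.

Lemma prodeig_le lam : (forall j k, 0 <= lam j k) -> (forall j k, lam j k <= lam j 0%nat) ->
  forall t j0, prodeig lam j0 t <= rprod j0 (length t) (fun j => lam j 0%nat).
Proof. intros H H' t; induction t; intros; simpl; [lra|].
  apply Rmult_le_compat; auto. apply prodeig_nonneg; auto. Qed.

Lemma rprod_last h d : forall j0, rprod j0 (S d) h = rprod j0 d h * h (j0 + d)%nat.
Proof. induction d; intros; simpl. rewrite Nat.add_0_r; ring.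
  simpl in IHd. rewrite IHd. replace (S j0 + d)%nat with (j0 + S d)%nat by lia. ring. Qed.

Lemma rprod_pos h d : forall j0, (forall j, 0 < h j) -> 0 < rprod j0 d h.
Proof. induction d; intros; simpl; [lra|]. apply Rmult_lt_0_compat; auto. Qed.

Lemma rprod_mono h1 h2 d : forall j0, (forall j, 0 <= h1 j <= h2 j) -> rprod j0 d h1 <= rprod j0 d h2.
Proof. induction d; intros; simpl; [lra|].
  assert (0 <= rprod (S j0) d h1).
  { clear IHd. revert j0; induction d; intros; simpl; [lra|]. apply Rmult_le_pos; auto. apply H. }
  apply Rmult_le_compat; auto; apply H. Qed.

Lemma rprod_mul h1 h2 d : forall j0, rprod j0 d (fun j => h1 j * h2 j) = rprod j0 d h1 * rprod j0 d h2.
Proof. induction d; intros; simpl; [ring|]. rewrite IHd; ring. Qed.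

Lemma rprod_nonneg h d : forall j0, (forall j, 0 <= h j) -> 0 <= rprod j0 d h.
Proof. induction d; intros; simpl; [lra|]. apply Rmult_le_pos; auto. Qed.

Lemma fsum_nonneg f d : (forall j, 0 <= f j) -> 0 <= fsum f d.
Proof. intros H; induction d; simpl; [lra|]. specialize (H d); lra. Qed.

Lemma rprod_bern x d : (forall j, 0 <= x j <= 1) -> 1 - fsum (fun j => 1 - x j) d <= rprod 0 d x.
Proof. intros H; induction d. simpl; lra.
  rewrite rprod_last. simpl.
  assert (0 <= rprod 0 d x) by (apply rprod_nonneg; intros; apply H).
  assert (0 <= fsum (fun j => 1 - x j) d) by (apply fsum_nonneg; intros j; specialize (H j); lra).
  specialize (H d). nra. Qed.

Lemma rprod_sup x d : (forall j, 0 <= x j) -> 1 + fsum x d <= rprod 0 d (fun j => 1 + x j).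
Proof. intros H; induction d. simpl; lra.
  rewrite rprod_last. simpl.
  assert (0 <= fsum x d) by (apply fsum_nonneg; auto).
  specialize (H d). nra. Qed.

Definition pos {X} (f : X -> R) (x : X) : bool := if Rlt_dec 0 (f x) then true else false.

Lemma lsum_filter_pos {X} (f : X -> R) l : (forall x, In x l -> 0 <= f x) ->
  lsum f (filter (pos f) l) = lsum f l.
Proof. induction l; simpl; intros H; auto. unfold pos at 1. destruct (Rlt_dec 0 (f a)); simpl.
  rewrite IHl; auto. assert (0 <= f a) by auto. rewrite IHl; auto. lra. Qed.

Lemma fsum_le_sum f L : infinite_sum f L -> (forall k, 0 <= f k) -> forall n, fsum f n <= L.
Proof. intros HL H0 n.
  assert (forall m, fsum f (S m) <= L). { intros m. rewrite fsum_sumf. apply sum_incr; auto. }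
  destruct n; auto. simpl. specialize (H 0%nat). simpl in H. specialize (H0 0%nat). lra. Qed.

Lemma fiber_fwd lam d mu : tensor_listing lam d mu ->
  forall c, 0 < c -> exists (l1 : list nat) (l2 : list (list nat)), NoDup l1 /\ NoDup l2 /\ length l1 = length l2 /\
     (forall x, In x l1 <-> True /\ mu x = c) /\ (forall y, In y l2 <-> length y = d /\ prodeig lam 0 y = c).
Proof. intros [_ [_ H]] c Hc. destruct (H c Hc) as [l1 [l2 [A1 [A2 [A3 [A4 A5]]]]]].
  exists l1, l2; repeat split; auto; intros; try apply A4; try tauto; apply A5; auto. Qed.

Lemma fiber_bwd lam d mu : tensor_listing lam d mu ->
  forall c, 0 < c -> exists (l1 : list (list nat)) (l2 : list nat), NoDup l1 /\ NoDup l2 /\ length l1 = length l2 /\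
     (forall y, In y l1 <-> length y = d /\ prodeig lam 0 y = c) /\ (forall x, In x l2 <-> True /\ mu x = c).
Proof. intros Ht c Hc. destruct (fiber_fwd lam d mu Ht c Hc) as [l1 [l2 [A1 [A2 [A3 [A4 A5]]]]]].
  exists l2, l1; repeat split; auto; intros; try apply A4; try apply A5; tauto. Qed.

Lemma map_length_eq {A B C} (f : A -> C) (g : B -> C) F G : map g G = map f F -> length G = length F.
Proof. intros H. rewrite <- (length_map g G), <- (length_map f F), H; auto. Qed.

Section D.
Variable lam : nat -> nat -> R.
Hypothesis Hnn : forall j k, 0 <= lam j k.
Hypothesis Hdec : forall j k, lam j (S k) <= lam j k.
Variable d : nat.
Variable mu : nat -> R.
Hypothesis Htl : tensor_listing lam d mu.

Lemma mu_nn : forall k, 0 <= mu k.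
Proof. destruct Htl; auto. Qed.
Lemma mu_dec : forall k, mu (S k) <= mu k.
Proof. destruct Htl as [_ [H _]]; auto. Qed.

Lemma lam_le0 : forall j k, lam j k <= lam j 0%nat.
Proof. intros j k. apply (noninc_le (lam j)); auto; lia. Qed.

Lemma mu_top : mu 0%nat <= rprod 0 d (fun j => lam j 0%nat).
Proof.
  destruct (Rlt_dec 0 (mu 0%nat)) as [Hp|Hp].
  - destruct (transfer (fun _ => True) (fun y => length y = d) mu (prodeig lam 0)
      (fiber_fwd lam d mu Htl) (0%nat :: nil)) as [G [HG1 [HG2 HG3]]].
    + repeat constructor; simpl; tauto.
    + intros x [<-|[]]; auto.
    + destruct G as [|t G]; simpl in HG3; try discriminate. inversion HG3 as [[H1 H2]].
      rewrite <- (HG2 t) by (left; auto). apply prodeig_le; auto. apply lam_le0.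
  - assert (0 <= rprod 0 d (fun j => lam j 0%nat)) by (apply rprod_nonneg; auto). lra.
Qed.

Lemma LB : forall F, NoDup F -> (forall t, In t F -> length t = d) ->
  lsum (prodeig lam 0) F <= fsum mu (length F).
Proof.
  intros F HN HL.
  set (F' := filter (pos (prodeig lam 0)) F).
  destruct (transfer (fun y => length y = d) (fun _ => True) (prodeig lam 0) mu
      (fiber_bwd lam d mu Htl) F') as [G [HG1 [HG2 HG3]]].
  - apply NoDup_filter; auto.
  - intros x Hx. apply filter_In in Hx as [Hx1 Hx2]. split; auto.
    unfold pos in Hx2. destruct (Rlt_dec 0 (prodeig lam 0 x)); auto; discriminate.
  - rewrite <- (lsum_filter_pos _ F) by (intros; apply prodeig_nonneg; auto).
    fold F'. rewrite <- (lsum_mapeq _ _ _ _ HG3).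
    eapply Rle_trans. apply rank_lemma; auto. apply mu_nn. apply mu_dec.
    apply fsum_mono. apply mu_nn.
    rewrite (map_length_eq _ _ _ _ HG3). unfold F'. apply filter_length_le.
Qed.

Fixpoint lmax (t : list nat) : nat := match t with nil => 0%nat | k :: t' => Nat.max k (lmax t') end.
Fixpoint gmax (G : list (list nat)) : nat := match G with nil => 0%nat | t :: G' => Nat.max (lmax t) (gmax G') end.
Lemma lmax_ge t k : In k t -> (k <= lmax t)%nat.
Proof. induction t as [|a t IHt]; simpl; intros H; [contradiction|destruct H as [H|H]]; subst; try lia. specialize (IHt H); lia. Qed.
Lemma gmax_ge G t : In t G -> (lmax t <= gmax G)%nat.
Proof. induction G as [|a G IHG]; simpl; intros H; [contradiction|destruct H as [H|H]]; subst; try lia. specialize (IHG H); lia. Qed.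
Lemma inbox_const M t : forall j0, (forall k, In k t -> (k < M)%nat) -> inbox j0 (fun _ => M) t.
Proof. induction t; simpl; intros; auto. Qed.

Lemma UB (Lam : nat -> R) : (forall j, infinite_sum (lam j) (Lam j)) ->
  forall K, fsum mu K <= rprod 0 d Lam.
Proof.
  intros HLam K.
  set (F := filter (pos mu) (seq 0 K)).
  destruct (transfer (fun _ => True) (fun y => length y = d) mu (prodeig lam 0)
      (fiber_fwd lam d mu Htl) F) as [G [HG1 [HG2 HG3]]].
  - apply NoDup_filter, seq_NoDup.
  - intros x Hx. apply filter_In in Hx as [Hx1 Hx2]. split; auto.
    unfold pos in Hx2. destruct (Rlt_dec 0 (mu x)); auto; discriminate.
  - rewrite <- lsum_seq, <- (lsum_filter_pos _ (seq 0 K)) by (intros; apply mu_nn).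
    fold F. rewrite <- (lsum_mapeq _ _ _ _ HG3).
    set (M := S (gmax G)).
    eapply Rle_trans. apply (lsum_incl _ G (box 0 d (fun _ => M))); auto.
    + intros t Ht. apply box_In. split; auto. apply inbox_const.
      intros k Hk. pose proof (lmax_ge _ _ Hk). pose proof (gmax_ge _ _ Ht). unfold M; lia.
    + intros; apply prodeig_nonneg; auto.
    + rewrite box_sum. apply rprod_mono. intros j. split.
      apply fsum_nonneg; auto. apply fsum_le_sum; auto.
Qed.

End D.

Lemma isum_cv f L : infinite_sum f L -> forall eps, 0 < eps -> exists N, forall n, (n >= N)%nat ->
  L - eps < fsum f n < L + eps.
Proof. intros H eps He. destruct (H eps He) as [N HN]. exists (S N). intros n Hn.
  destruct n; [lia|]. rewrite fsum_sumf. specialize (HN n ltac:(lia)). unfold Rdist in HN.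
  apply Rabs_def2 in HN. lra. Qed.

Lemma cv_isum f L : (forall eps, 0 < eps -> exists N, forall n, (n >= N)%nat -> L - eps < fsum f n < L + eps) ->
  infinite_sum f L.
Proof. intros H eps He. destruct (H eps He) as [N HN]. exists N. intros n Hn.
  rewrite <- fsum_sumf. specialize (HN (S n) ltac:(lia)). unfold Rdist. apply Rabs_def1; lra. Qed.

Lemma fsum_shift f n m : fsum (fun k => f (n + k)%nat) m = fsum f (n + m) - fsum f n.
Proof. induction m; simpl. rewrite Nat.add_0_r; ring.
  rewrite IHm. replace (n + S m)%nat with (S (n + m)) by lia. simpl. ring. Qed.

Lemma tail_sum f L n : infinite_sum f L -> infinite_sum (fun k => f (n + k)%nat) (L - fsum f n).
Proof. intros H. apply cv_isum. intros eps He. destruct (isum_cv f L H eps He) as [N HN].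
  exists N. intros m Hm. rewrite fsum_shift. specialize (HN (n + m)%nat ltac:(lia)). lra. Qed.

Lemma bounded_sum f B : (forall k, 0 <= f k) -> (forall n, fsum f n <= B) -> exists L, infinite_sum f L.
Proof. intros H0 HB.
  destruct (growing_cv (sum_f_R0 f)) as [L HL].
  - intros n. simpl. specialize (H0 (S n)). lra.
  - exists B. intros x [i ->]. rewrite <- fsum_sumf. auto.
  - exists L. exact HL. Qed.

Lemma sum_le_bound f L B : infinite_sum f L -> (forall n, fsum f n <= B) -> L <= B.
Proof. intros H HB. destruct (Rle_dec L B); auto. exfalso.
  destruct (isum_cv f L H (L - B)) as [N HN]; [lra|]. specialize (HN N (le_n _)). specialize (HB N). lra. Qed.

Lemma isum_scale f L a : infinite_sum f L -> infinite_sum (fun k => f k * a) (L * a).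
Proof. intros H. destruct (Req_dec a 0) as [->|Ha].
  - apply cv_isum; intros eps He; exists 0%nat; intros. 
    assert (forall n, fsum (fun k => f k * 0) n = 0). { induction n0; simpl; [ring|]. rewrite IHn0; ring. }
    rewrite H1. lra.
  - apply cv_isum; intros eps He. destruct (isum_cv f L H (eps / Rabs a)) as [N HN].
    apply Rdiv_lt_0_compat; auto. apply Rabs_pos_lt; auto.
    exists N. intros n Hn. specialize (HN n Hn).
    assert (E: fsum (fun k => f k * a) n = fsum f n * a). { clear. induction n; simpl; [ring|]. rewrite IHn; ring. }
    rewrite E. assert (Rabs (fsum f n - L) < eps / Rabs a) by (apply Rabs_def1; lra).
    assert (Rabs (fsum f n * a - L * a) < eps).
    { replace (fsum f n * a - L * a) with ((fsum f n - L) * a) by ring. rewrite Rabs_mult.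
      assert (0 < Rabs a) by (apply Rabs_pos_lt; auto).
      apply (Rmult_lt_compat_r (Rabs a)) in H0; auto. unfold Rdiv in H0.
      rewrite Rmult_assoc, Rinv_l in H0; lra. }
    apply Rabs_def2 in H1. lra. Qed.

Lemma fsum_S0 f K : fsum f (S K) = f 0%nat + fsum (fun k => f (S k)) K.
Proof. induction K; simpl in *; [ring|]. rewrite IHK; ring. Qed.

Lemma unif (P : nat -> nat -> Prop) : (forall j, exists N, forall n, (n >= N)%nat -> P j n) ->
  forall J, exists N, forall j n, (j < J)%nat -> (n >= N)%nat -> P j n.
Proof. intros H J; induction J.
  - exists 0%nat; intros; lia.
  - destruct IHJ as [N1 H1]. destruct (H J) as [N2 H2]. exists (Nat.max N1 N2).
    intros j n Hj Hn. destruct (Nat.eq_dec j J). subst; apply H2; lia. apply H1; lia. Qed.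

Lemma fsum_plus f g d : fsum (fun j => f j + g j) d = fsum f d + fsum g d.
Proof. induction d; simpl; [ring|]. rewrite IHd; ring. Qed.

Lemma fsum_le f g d : (forall j, f j <= g j) -> fsum f d <= fsum g d.
Proof. intros H; induction d; simpl; [lra|]. specialize (H d); lra. Qed.

Lemma cv_le_bound u l B : Un_cv u l -> (forall n, u n <= B) -> l <= B.
Proof. intros H HB. destruct (Rle_dec l B); auto. exfalso.
  destruct (H (l - B)) as [N HN]; [lra|]. specialize (HN N (le_n _)). unfold Rdist in HN.
  apply Rabs_def2 in HN. specialize (HB N). lra. Qed.

Lemma cv_fsum (g : nat -> nat -> R) (s : nat -> R) : (forall j, Un_cv (g j) (s j)) ->
  forall d, Un_cv (fun K => fsum (fun j => g j K) d) (fsum s d).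
Proof. intros H d; induction d; simpl.
  - intros eps He; exists 0%nat; intros; unfold Rdist; rewrite Rminus_diag, Rabs_R0; lra.
  - apply CV_plus; auto. Qed.

Lemma fsum_Sn f n : fsum f (S n) = fsum f n + f n.
Proof. reflexivity. Qed.

Lemma s_exists (f : nat -> R) L a : infinite_sum f L -> infinite_sum (fun k => f (S k) / a) ((L - f 0%nat) / a).
Proof. intros H. pose proof (isum_scale _ _ (/ a) (tail_sum f L 1 H)). simpl in H0.
  unfold Rdiv. replace (L - f 0%nat) with (L - (0 + f 0%nat)) by ring. exact H0. Qed.

Lemma s_rel (f : nat -> R) L a s : 0 < a -> infinite_sum f L -> infinite_sum (fun k => f (S k) / a) s ->
  s = (L - f 0%nat) / a.
Proof. intros Ha H1 H2. eapply uniqueness_sum; eauto. apply s_exists; auto. Qed.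

Lemma fsum_le_n mu : (forall k, mu (S k) <= mu k) -> forall n, fsum mu n <= INR n * mu 0%nat.
Proof. intros H n; induction n; [simpl; lra|].
  pose proof (noninc_le mu H 0 n ltac:(lia)). rewrite fsum_Sn, S_INR. lra. Qed.

Lemma fsum_ge0 f n : (forall k, 0 <= f k) -> (1 <= n)%nat -> f 0%nat <= fsum f n.
Proof. intros H Hn. destruct n; [lia|]. rewrite fsum_S0. pose proof (fsum_nonneg (fun k => f (S k)) n (fun k => H (S k))). lra. Qed.

Lemma mask_c (s : nat -> R) J : (forall j, 0 <= s j) ->
  forall d, fsum (fun j => if Nat.ltb j J then 0 else s j) d + fsum s J <= fsum s (Nat.max d J).
Proof. intros H0 d; induction d as [|d IHd].
  - simpl; lra.
  - rewrite fsum_Sn. destruct (Nat.ltb_spec d J).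
    + replace (Nat.max (S d) J) with (Nat.max d J) by lia. lra.
    + replace (Nat.max (S d) J) with (S d) by lia. replace (Nat.max d J) with d in IHd by lia. rewrite fsum_Sn. specialize (H0 d). lra.
Qed.

Lemma mask_e (eta : R) J : 0 <= eta ->
  forall d, fsum (fun j => if Nat.ltb j J then eta else 0) d <= INR J * eta.
Proof. intros H0 d.
  assert (forall d, fsum (fun j => if Nat.ltb j J then eta else 0) d = INR (Nat.min d J) * eta).
  { clear d; induction d as [|d IHd]. simpl. ring. rewrite fsum_Sn. destruct (Nat.ltb_spec d J).
    - replace (Nat.min (S d) J) with (S (Nat.min d J)) by lia. rewrite IHd, S_INR; ring.
    - replace (Nat.min (S d) J) with (Nat.min d J) by lia. rewrite IHd; ring. }
  rewrite H. apply Rmult_le_compat_r; auto. apply le_INR; lia. Qed.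

Lemma div_le y L e : 0 < L -> y <= e * L -> y / L <= e.
Proof. intros HL H. unfold Rdiv. replace e with (e * L * / L) by (field; lra).
  apply Rmult_le_compat_r; auto. left; apply Rinv_0_lt_compat; auto. Qed.

Lemma rprod_ext h1 h2 d : forall j0, (forall j, h1 j = h2 j) -> rprod j0 d h1 = rprod j0 d h2.
Proof. induction d; intros; simpl; auto. rewrite H, (IHd (S j0)); auto. Qed.

Lemma fsum_scale f c n : fsum (fun k => f k * c) n = fsum f n * c.
Proof. induction n; simpl; [ring|]. rewrite IHn; ring. Qed.

Theorem proposition5
  (lam : nat -> nat -> R)
  (Hlam : forall j, eig_seq (lam j))
  (Hpos : forall j, 0 < lam j 0%nat)
  (mu : nat -> nat -> R)
  (Hmu : forall d, (1 <= d)%nat -> tensor_listing lam d (mu d)) :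
  (forall eps, 0 < eps < 1 ->
     exists N : nat, forall d, (1 <= d)%nat ->
       exists n : nat, (n <= N)%nat /\ approx_ok (mu d) n eps)
  <->
  (exists s : nat -> R,
     (forall j, infinite_sum (fun k => lam j (S k) / lam j 0%nat) (s j)) /\
     exists S, infinite_sum s S).
Proof.
  assert (Hnn : forall j k, 0 <= lam j k) by (intros j k; apply (Hlam j)).
  assert (Hdec : forall j k, lam j (S k) <= lam j k) by (intros j k; apply (Hlam j)).
  set (Lam := fun j => proj1_sig (constructive_indefinite_description _ (proj2 (proj2 (Hlam j))))).
  assert (HLam : forall j, infinite_sum (lam j) (Lam j)) by (intros j; unfold Lam; apply proj2_sig).
  assert (HLa : forall j, lam j 0%nat <= Lam j).
  { intros j. apply (Rle_trans _ (fsum (lam j) 1)). simpl; lra. apply fsum_le_sum; auto. }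
  assert (HLpos : forall j, 0 < Lam j) by (intros j; specialize (Hpos j); specialize (HLa j); lra).
  split.
  - intros Hi.
    destruct (Hi (1/2)) as [N HN]; [lra|].
    set (C := 4/3 * INR N).
    assert (Hbound : forall d K, (1 <= d)%nat ->
      rprod 0 d (fun j => fsum (lam j) (S K)) <= C * rprod 0 d (fun j => lam j 0%nat)).
    { intros d K Hd. destruct (HN d Hd) as [n [Hn [Ld [T [H1 [H2 H3]]]]]].
      pose proof (Hmu d Hd) as Htl.
      pose proof (tail_sum _ _ n H1) as H4. pose proof (uniqueness_sum _ _ _ H2 H4) as HT. subst T.
      pose proof (LB lam Hnn d (mu d) Htl (box 0 d (fun _ => S K)) (box_NoDup _ _ _)
         (fun t Ht => proj1 (proj1 (box_In _ _ _ _) Ht))) as HLB.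
      rewrite box_sum in HLB.
      assert (fsum (mu d) (length (box 0 d (fun _ => S K))) <= Ld)
        by (apply fsum_le_sum; auto; apply (mu_nn _ _ _ Htl)).
      assert (0 < rprod 0 d (fun j => fsum (lam j) (S K))).
      { apply rprod_pos; intros j. pose proof (fsum_ge0 (lam j) (S K) (Hnn j) ltac:(lia)).
        specialize (Hpos j); lra. }
      assert (HLd : 0 < Ld) by lra.
      assert (Ld - fsum (mu d) n <= Ld / 4).
      { apply (Rmult_le_compat_r Ld) in H3; [|lra]. unfold Rdiv in H3.
        rewrite Rmult_assoc, Rinv_l in H3; lra. }
      pose proof (fsum_le_n (mu d) (mu_dec _ _ _ Htl) n).
      pose proof (mu_top lam Hnn Hdec d (mu d) Htl).
      assert (INR n <= INR N) by (apply le_INR; auto).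
      assert (0 <= mu d 0%nat) by (apply (mu_nn _ _ _ Htl)).
      assert (0 <= INR n) by apply pos_INR.
      assert (INR n * mu d 0%nat <= INR N * rprod 0 d (fun j => lam j 0%nat)).
      { apply Rmult_le_compat; auto. }
      unfold C. lra. }
    set (s := fun j => (Lam j - lam j 0%nat) / lam j 0%nat).
    assert (Hs : forall j, infinite_sum (fun k => lam j (S k) / lam j 0%nat) (s j))
      by (intros j; apply s_exists; auto).
    assert (Hs0 : forall j, 0 <= s j).
    { intros j; unfold s. specialize (HLa j). specialize (Hpos j). apply Rmult_le_pos; [lra|].
      left; apply Rinv_0_lt_compat; auto. }
    set (g := fun j K => sum_f_R0 (fun k => lam j (S k) / lam j 0%nat) K).
    assert (Hg0 : forall j K, 0 <= g j K).
    { intros j K. unfold g. rewrite <- fsum_sumf. apply fsum_nonneg. intros k.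
      unfold Rdiv. apply Rmult_le_pos; auto. left; apply Rinv_0_lt_compat; auto. }
    assert (Hsig : forall d K, (1 <= d)%nat -> fsum (fun j => g j K) d <= C - 1).
    { intros d K Hd.
      assert (E : rprod 0 d (fun j => fsum (lam j) (S (S K))) =
                  rprod 0 d (fun j => lam j 0%nat) * rprod 0 d (fun j => 1 + g j K)).
      { rewrite <- rprod_mul. apply rprod_ext. intros j. unfold g.
        rewrite <- fsum_sumf, fsum_S0. unfold Rdiv. rewrite fsum_scale.
        specialize (Hpos j). field. lra. }
      pose proof (Hbound d (S K) Hd). rewrite E in H.
      pose proof (rprod_sup (fun j => g j K) d (fun j => Hg0 j K)).
      assert (0 < rprod 0 d (fun j => lam j 0%nat)) by (apply rprod_pos; auto).
      assert (rprod 0 d (fun j => 1 + g j K) <= C).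
      { apply (Rmult_le_reg_l (rprod 0 d (fun j => lam j 0%nat))); auto. lra. }
      lra. }
    assert (Hsd : forall d, (1 <= d)%nat -> fsum s d <= C - 1).
    { intros d Hd. apply (cv_le_bound (fun K => fsum (fun j => g j K) d)).
      apply cv_fsum. intros j. exact (Hs j). intros K; auto. }
    destruct (bounded_sum s (C - 1) Hs0) as [Ssum HS].
    { intros n. apply (Rle_trans _ (fsum s (S n))). apply fsum_mono; auto. apply Hsd; lia. }
    exists s; split; auto. exists Ssum; auto.
  - intros [s [Hs [Ssum HS]]] eps Heps.
    assert (Hsr : forall j, s j = (Lam j - lam j 0%nat) / lam j 0%nat)
      by (intros j; apply s_rel; auto).
    assert (Hs0 : forall j, 0 <= s j).
    { intros j; rewrite Hsr. specialize (HLa j). specialize (Hpos j). apply Rmult_le_pos; [lra|].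
      left; apply Rinv_0_lt_compat; auto. }
    set (delta := eps ^ 2 / 2).
    assert (Heps2 : 0 < eps ^ 2 < 1) by (simpl; nra).
    assert (Hdelta : 0 < delta) by (unfold delta; lra).
    destruct (isum_cv s Ssum HS delta Hdelta) as [J HJ]. specialize (HJ J (le_n _)).
    assert (HsS : forall d, fsum s d <= Ssum) by (apply fsum_le_sum; auto).
    set (eta := delta / (INR J + 1)).
    assert (HJ1 : 0 < INR J + 1) by (pose proof (pos_INR J); lra).
    assert (Heta : 0 < eta) by (unfold eta; apply Rdiv_lt_0_compat; auto).
    assert (HetaJ : INR J * eta <= delta).
    { unfold eta. apply (Rmult_le_reg_r (INR J + 1)); auto. unfold Rdiv.
      replace (INR J * (delta * / (INR J + 1)) * (INR J + 1)) with (INR J * delta) by (field; lra). nra. }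
    destruct (unif (fun j n => Lam j - eta * lam j 0%nat < fsum (lam j) n)) with (J := J) as [K0 HK0].
    { intros j. destruct (isum_cv (lam j) (Lam j) (HLam j) (eta * lam j 0%nat)) as [N HN].
      apply Rmult_lt_0_compat; auto. exists N; intros n Hn; specialize (HN n Hn); lra. }
    set (K := S K0).
    set (Kf := fun j => if Nat.ltb j J then K else 1%nat).
    exists (nprod 0 J Kf). intros d Hd.
    pose proof (Hmu d Hd) as Htl.
    set (PL := rprod 0 d Lam).
    assert (HPL : 0 < PL) by (apply rprod_pos; auto).
    pose proof (UB lam Hnn d (mu d) Htl Lam HLam) as HUB.
    destruct (bounded_sum (mu d) PL (mu_nn _ _ _ Htl) HUB) as [Ld HLd].
    assert (HLdPL : Ld <= PL) by (apply (sum_le_bound (mu d)); auto).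
    set (n := nprod 0 d Kf).
    exists n. split. { apply nprod_bound; unfold K; lia. }
    exists Ld, (Ld - fsum (mu d) n). split; auto. split. { apply tail_sum; auto. }
    pose proof (LB lam Hnn d (mu d) Htl (box 0 d Kf) (box_NoDup _ _ _)
         (fun t Ht => proj1 (proj1 (box_In _ _ _ _) Ht))) as HLB.
    rewrite box_length in HLB. fold n in HLB. rewrite box_sum in HLB.
    set (rho := fun j => fsum (lam j) (Kf j) / Lam j).
    assert (Erho : rprod 0 d (fun j => fsum (lam j) (Kf j)) = rprod 0 d rho * PL).
    { unfold PL. rewrite <- rprod_mul. apply rprod_ext; intros j. unfold rho.
      specialize (HLpos j). field. lra. }
    assert (Hrho01 : forall j, 0 <= rho j <= 1).
    { intros j. unfold rho. specialize (HLpos j). split.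
      - apply Rmult_le_pos. apply fsum_nonneg; auto. left; apply Rinv_0_lt_compat; auto.
      - apply div_le; auto. rewrite Rmult_1_l. apply fsum_le_sum; auto. }
    assert (Hb : forall j, 1 - rho j <= (if Nat.ltb j J then eta else 0) + (if Nat.ltb j J then 0 else s j)).
    { intros j. unfold rho, Kf. specialize (HLpos j). specialize (HLa j). specialize (Hpos j).
      destruct (Nat.ltb_spec j J).
      - assert (Hk := HK0 j K H ltac:(unfold K; lia)).
        replace (1 - fsum (lam j) K / Lam j) with ((Lam j - fsum (lam j) K) / Lam j) by (field; lra).
        apply div_le; auto. nra.
      - rewrite Hsr. simpl fsum.
        replace (1 - (0 + lam j 0%nat) / Lam j) with ((Lam j - lam j 0%nat) / Lam j) by (field; lra).
        unfold Rdiv. rewrite Rplus_0_l. apply Rmult_le_compat_l; [lra|].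
        apply Rinv_le_contravar; auto. }
    assert (Hsumb : fsum (fun j => 1 - rho j) d <= 2 * delta).
    { eapply Rle_trans. apply fsum_le; exact Hb. rewrite fsum_plus.
      pose proof (mask_e eta J (Rlt_le _ _ Heta) d). pose proof (mask_c s J Hs0 d).
      pose proof (HsS (Nat.max d J)). lra. }
    pose proof (rprod_bern rho d Hrho01).
    assert (fsum (mu d) n <= Ld) by (apply fsum_le_sum; auto; apply (mu_nn _ _ _ Htl)).
    assert (Hrho : 1 - 2 * delta <= rprod 0 d rho) by lra.
    assert (H2d : 2 * delta = eps ^ 2) by (unfold delta; field).
    assert ((1 - 2 * delta) * PL <= fsum (mu d) n).
    { rewrite Erho in HLB. apply (Rle_trans _ (rprod 0 d rho * PL)); auto.
      apply Rmult_le_compat_r; lra. }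
    assert (HLd0 : 0 < Ld) by nra.
    apply div_le; auto. nra.
Qed.
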